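(* Let $\mathbf{k}$ be an algebraically closed field, $G=\mathrm{GL}_n$, $(\rho,M)$ a finite-dimensional rational representation, $\underline{G}=G\ltimes_\rho M$, $\underline{\mathcal{N}}=\mathcal{N}\times M$. For a partition $\lambda$ of $n$ let $J=J_\lambda$ be the Jordan standard nilpotent matrix of type $\lambda$, $G_J$ its centralizer in $G$, and $J M=\mathsf{d}\rho(J)(M)$, a $G_J$-submodule of $M$. Then: (1) for any $w\in M$, every element of $\{J\}\times(w+JM)$ lies in the $\underline{G}$-orbit of $(J,w)$; (2) $\underline{\mathcal{N}}$ has finitely many $\underline{G}$-orbits if and only if for every partition $\lambda$ of $n$, $G_{J_\lambda}$ has finitely many orbits on $M/J_\lambda M$.
   Context: $\underline{G}$ is $G\times M$ with product $(g_1,v_1)(g_2,v_2)=(g_1g_2,\rho(g_1)v_2+v_1)$, acting on $\mathfrak{gl}_n\times M$ by $\mathrm{Ad}(g,v)(X,w)=(\mathrm{Ad}(g)X,-\mathsf{d}\rho(\mathrm{Ad}(g)X)v+\rho(g)w)$. $\mathcal{N}$ is the nilpotent cone of $\mathfrak{gl}_n$. $J_\lambda$ is block diagonal with blocks $J_{\lambda_i}$ having $1$ on the superdiagonal and $0$ elsewhere. *)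

(* Defs.v *)
From HB Require Import structures.
From mathcomp Require Import all_boot all_order all_algebra all_field.
From mathcomp Require Import mpoly.
Set Implicit Arguments. Unset Strict Implicit. Unset Printing Implicit Defensive.
Import Order.TTheory GRing.Theory Num.Theory.
Local Open Scope ring_scope.

Definition mxcoord (k : fieldType) (n : nat) (g : 'M[k]_n) : 'I_(n * n) -> k :=
  fun i => mxvec g 0 i.

(* A rational representation of GL_n on M = k^m is presented by a matrix
   P of polynomials in the n*n matrix entries and an exponent e:
      rho g = det(g)^(-e) * P(g).
   (Every regular function on GL_n has this form.) *)
Definition repr_mx (k : fieldType) (n m e : nat)
    (P : 'M[{mpoly k[n * n]}]_m) (g : 'M[k]_n) : 'M[k]_m :=
  ((\det g) ^- e) *: map_mx (fun p => p.@[mxcoord g]) P.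

Definition is_rational_repr (k : fieldType) (n m e : nat)
    (P : 'M[{mpoly k[n * n]}]_m) : Prop :=
  repr_mx e P 1%:M = 1%:M /\
  forall g h : 'M[k]_n, g \in unitmx -> h \in unitmx ->
    repr_mx e P (g *m h) = repr_mx e P g *m repr_mx e P h.

(* The differential d rho at the identity, applied to X in gl_n:
   d(P / det^e)_1 (X) = dP_1(X) - e * P(1) * tr X. *)
Definition drepr_mx (k : fieldType) (n m e : nat)
    (P : 'M[{mpoly k[n * n]}]_m) (X : 'M[k]_n) : 'M[k]_m :=
  \matrix_(a, b)
    ((\sum_(i < n * n) ((P a b)^`M(i)).@[mxcoord 1%:M] * mxcoord X i)
     - e%:R * (P a b).@[mxcoord 1%:M] * \tr X).

(* Action of the semidirect product G_ = GL_n |x M on gl_n x M: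
   Ad(g,v)(X,w) = (g X g^-1, - d rho(g X g^-1) v + rho(g) w). *)
Definition Ad_semi (k : fieldType) (n m e : nat) (P : 'M[{mpoly k[n * n]}]_m)
    (g : 'M[k]_n) (v : 'cV[k]_m) (Xw : 'M[k]_n * 'cV[k]_m) :
    'M[k]_n * 'cV[k]_m :=
  let X' := g *m Xw.1 *m invmx g in
  (X', - (drepr_mx e P X' *m v) + repr_mx e P g *m Xw.2).

Definition in_semi_orbit (k : fieldType) (n m e : nat)
    (P : 'M[{mpoly k[n * n]}]_m) (Xw Xw' : 'M[k]_n * 'cV[k]_m) : Prop :=
  exists g : 'M[k]_n, exists v : 'cV[k]_m,
    g \in unitmx /\ Ad_semi e P g v Xw = Xw'.

Definition nilpotent_mx (k : fieldType) (n : nat) (X : 'M[k]_n) : Prop :=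
  exists r : nat, X ^+ r = 0.

Definition semi_nilcone_finite_orbits (k : fieldType) (n m e : nat)
    (P : 'M[{mpoly k[n * n]}]_m) : Prop :=
  exists reps : seq ('M[k]_n * 'cV[k]_m),
    (forall x, x \in reps -> nilpotent_mx x.1) /\
    forall (X : 'M[k]_n) (w : 'cV[k]_m), nilpotent_mx X ->
      exists2 x, x \in reps & in_semi_orbit e P x (X, w).

Definition is_partition (n : nat) (la : seq nat) : Prop :=
  [/\ all (fun p => 0 < p)%N la, sorted geq la & sumn la = n].

Definition block_ends (la : seq nat) : seq nat :=
  [seq sumn (take r la) | r <- iota 1 (size la)].

(* J_la: block diagonal, block i = Jordan block J_{la_i} (1 on the
   superdiagonal, 0 elsewhere).  Entry (i, i+1) is 1 iff i and i+1 lie in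
   the same block, i.e. i+1 is not a block end. *)
Definition jordan_nil (k : fieldType) (n : nat) (la : seq nat) : 'M[k]_n :=
  \matrix_(i, j) (if ((j : nat) == i.+1) && (i.+1 \notin block_ends la)
                  then 1 else 0).

Definition in_image_drepr (k : fieldType) (n m e : nat)
    (P : 'M[{mpoly k[n * n]}]_m) (J : 'M[k]_n) (u : 'cV[k]_m) : Prop :=
  exists y : 'cV[k]_m, u = drepr_mx e P J *m y.

Definition in_centralizer (k : fieldType) (n : nat) (J g : 'M[k]_n) : Prop :=
  g \in unitmx /\ g *m J = J *m g.

(* G_J has finitely many orbits on M / J M: finitely many classes
   w_0 + J M such that every class is G_J-translate of one of them. *)
Definition quot_finite_orbits (k : fieldType) (n m e : nat)
    (P : 'M[{mpoly k[n * n]}]_m) (J : 'M[k]_n) : Prop :=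
  exists reps : seq 'cV[k]_m,
    forall w : 'cV[k]_m, exists2 w0, w0 \in reps &
      exists g : 'M[k]_n, in_centralizer J g /\
        in_image_drepr e P J (repr_mx e P g *m w - w0).

(* Main.v *)
Require Import Defs.
From HB Require Import structures.
From mathcomp Require Import all_boot all_order all_algebra all_field.
From mathcomp Require Import mpoly.
From mathcomp Require Import zify ring.
From Stdlib Require Import Classical.
Set Implicit Arguments. Unset Strict Implicit. Unset Printing Implicit Defensive.
Import GRing.Theory.
Local Open Scope ring_scope.

Section Jordan.
Variables (K : fieldType) (n : nat) (X : 'M[K]_n).

Lemma exprSr_mx q : X ^+ q.+1 = X ^+ q *m X. Proof. by rewrite exprSr mulmxE. Qed.
Lemma exprS_mx q : X ^+ q.+1 = X *m X ^+ q. Proof. by rewrite exprS mulmxE. Qed.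

Definition spanL (L : seq 'rV[K]_n) : 'M[K]_n := (\sum_(v <- L) <<v>>)%MS.

Lemma spanL_nil : spanL [::] = 0. Proof. by rewrite /spanL big_nil. Qed.
Lemma spanL_cons v L : spanL (v :: L) = (<<v>> + spanL L)%MS.
Proof. by rewrite /spanL big_cons. Qed.

Lemma spanL_sub m (L : seq 'rV[K]_n) (B : 'M[K]_(m, n)) :
  (spanL L <= B)%MS = all (fun v => v <= B)%MS L.
Proof.
elim: L => [|v L IH]; first by rewrite spanL_nil sub0mx.
by rewrite spanL_cons addsmx_sub genmxE IH.
Qed.

Lemma mem_spanL v L : v \in L -> (v <= spanL L)%MS.
Proof.
elim: L => [|w L IH] //=; rewrite inE spanL_cons => /orP[/eqP->|/IH h].
  by apply: submx_trans (addsmxSl _ _); rewrite genmxE.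
by apply: submx_trans h (addsmxSr _ _).
Qed.

Lemma rank_spanL L : (\rank (spanL L) <= size L)%N.
Proof.
elim: L => [|v L IH]; first by rewrite spanL_nil mxrank0.
rewrite spanL_cons /=; apply: leq_trans (mxrank_adds_leqif _ _).1 _.
by rewrite genmxE; exact: (leq_add (rank_leq_row v) IH).
Qed.

Definition chainv (p : 'rV[K]_n * nat) : seq 'rV[K]_n :=
  [seq p.1 *m X ^+ q | q <- iota 0 p.2].
Definition chainvs (s : seq ('rV[K]_n * nat)) := flatten (map chainv s).

Lemma size_chainvs s : size (chainvs s) = sumn (map snd s).
Proof. by elim: s => [|p s IH] //=; rewrite size_cat IH size_map size_iota. Qed.

Lemma mem_chainvs v s : v \in chainvs s ->
  exists2 p, p \in s & exists2 q, (q < p.2)%N & v = p.1 *m X ^+ q.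
Proof.
case/flattenP => c /mapP[p ps ->] /mapP[q]; rewrite mem_iota add0n => /andP[_ hq] ->.
by exists p => //; exists q.
Qed.

Lemma chainvs_mem p q s : p \in s -> (q < p.2)%N -> p.1 *m X ^+ q \in chainvs s.
Proof.
move=> ps hq; apply/flattenP; exists (chainv p); first by apply: map_f.
by apply: map_f; rewrite mem_iota.
Qed.

Lemma stabX (W : 'M[K]_n) m (v : 'M[K]_(m, n)) q :
  (W *m X <= W)%MS -> (v <= W)%MS -> (v *m X ^+ q <= W)%MS.
Proof.
move=> sW hv; elim: q => [|q IH]; first by rewrite expr0 mulmx1.
by rewrite exprSr_mx mulmxA; apply: submx_trans (submxMr X IH) sW.
Qed.

Lemma heads_sub (W : 'M[K]_n) s : (W *m X <= W)%MS ->
  all (fun p => p.1 <= W)%MS s -> (spanL (chainvs s) <= W)%MS.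
Proof.
move=> sW /allP hs; rewrite spanL_sub; apply/allP => v /mem_chainvs[p ps [q _ ->]].
exact: stabX (hs p ps).
Qed.

Definition chain_ok (W : 'M[K]_n) (s : seq ('rV[K]_n * nat)) :=
  [/\ all (fun p => 0 < p.2)%N s, sorted geq (map snd s),
      all (fun p => p.1 *m X ^+ p.2 == 0) s,
      all (fun p => p.1 <= W)%MS s &
      (spanL (chainvs s) == W)%MS /\ size (chainvs s) = \rank W].

Lemma chain_nil (W : 'M[K]_n) : \rank W = 0%N -> chain_ok W [::].
Proof.
move=> r0; have /eqP W0 : W == 0 by rewrite -mxrank_eq0 r0.
by split => //=; rewrite ?r0 // W0 spanL_nil submx_refl.
Qed.

Lemma sorted_succ (l : seq nat) (l2 : seq 'rV[K]_n) : sorted geq l ->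
  sorted geq (map succn l ++ map (fun _ => 1%N) l2).
Proof.
have tr : transitive geq by move=> a b c /= h1 h2; exact: leq_trans h2 h1.
elim: l => [|x l IH] /=.
  by elim: l2 => [|z l2 IH2] //=; case: l2 IH2 => //= z' l2 ->; rewrite andbT.
rewrite !(path_sortedE tr) => /andP[hx hl]; rewrite IH // andbT all_cat.
apply/andP; split; last by apply/allP => y /mapP[z _ ->].
by rewrite all_map; apply: sub_all hx => y /=.
Qed.

Lemma size_rest (s : seq ('rV[K]_n * nat)) : all (fun p => 0 < p.2)%N s ->
  size (chainvs s) =
  (size (flatten [seq [seq p.1 *m X ^+ q | q <- iota 0 p.2.-1] | p <- s]) + size s)%N.
Proof.
elim: s => [|[u l] s IH] //= /andP[hp hs].
case: l hp => [|l] // _.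
rewrite !size_cat IH // !size_map !size_iota /=; lia.
Qed.

Lemma arith (a b c d e S x y : nat) : (a <= S)%N -> (b + c = a)%N -> x = b ->
  (d + e = c)%N -> (y <= e)%N -> S = (x + y + d)%N -> S = a.
Proof. lia. Qed.

Hypothesis nilX : exists r, X ^+ r = 0.

Lemma chain_exists N (W : 'M[K]_n) : (\rank W <= N)%N -> (W *m X <= W)%MS ->
  exists s, chain_ok W s.
Proof.
elim: N W => [|N IH] W hr sW.
  by exists [::]; apply: chain_nil; apply/eqP; rewrite -leqn0.
have [r0|rpos] := eqVneq (\rank W) 0%N; first by exists [::]; apply: chain_nil.
have ltr : (\rank (W *m X) < \rank W)%N.
  rewrite ltn_neqAle mxrankM_maxl andbT; apply/negP => /eqP eqr.
  have /andP[_ sWW] : (W *m X == W)%MS by rewrite -(mxrank_leqif_eq sW) eqr.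
  have Wj j : (W <= W *m X ^+ j)%MS.
    elim: j => [|j IHj]; first by rewrite expr0 mulmx1.
    by rewrite exprSr_mx mulmxA; apply: submx_trans sWW (submxMr X IHj).
  case: nilX => r Xr; move: (Wj r); rewrite Xr mulmx0 submx0 -mxrank_eq0.
  by rewrite (negbTE rpos).
set W' := W *m X.
have [s' [hpos hsort hend hin [hspan hsize]]] : exists s', chain_ok W' s'.
  by apply: IH; [rewrite -ltnS; apply: leq_trans ltr hr | exact: submxMr].
have sW'W : (W' <= W)%MS by [].
pose lift (w : 'rV[K]_n) := w *m pinvmx W' *m W.
have liftW w : (lift w <= W)%MS by rewrite submxMl.
have liftX w : (w <= W')%MS -> lift w *m X = w.
  by move=> hw; rewrite /lift -mulmxA mulmxKpV.
have hin' : forall p, p \in s' -> (p.1 <= W')%MS by apply/allP.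
have hend' : forall p, p \in s' -> p.1 *m X ^+ p.2 = 0.
  by move=> p ps; apply/eqP; move/allP: hend; apply.
have hpos' : forall p, p \in s' -> (0 < p.2)%N by apply/allP.
pose Bots := [seq p.1 *m X ^+ p.2.-1 | p <- s'].
pose Rest := flatten [seq [seq p.1 *m X ^+ q | q <- iota 0 p.2.-1] | p <- s'].
pose BotS := spanL Bots.
have rBot : (size s' <= \rank BotS)%N.
  have sub : (spanL (chainvs s') <= spanL Rest + BotS)%MS.
    rewrite spanL_sub; apply/allP => v /mem_chainvs[p ps [q hq ->]].
    have [lt|ge] := ltnP q p.2.-1.
      apply: submx_trans (addsmxSl _ _); apply: mem_spanL; apply/flattenP.
      exists [seq p.1 *m X ^+ q0 | q0 <- iota 0 p.2.-1]; first by apply: map_f.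
      by apply: map_f; rewrite mem_iota.
    have -> : q = p.2.-1 by lia.
    by apply: submx_trans (addsmxSr _ _); apply: mem_spanL; apply: map_f.
  have := mxrankS sub; rewrite (eqmxP hspan) -hsize (size_rest hpos) => h1.
  have h2 := (mxrank_adds_leqif (spanL Rest) BotS).1.
  have h3 := rank_spanL Rest.
  rewrite -(leq_add2l (size Rest)); apply: leq_trans h1 _; apply: leq_trans h2 _.
  by rewrite leq_add2r.
set KW := (W :&: kermx X)%MS.
have BotKW : (BotS <= KW)%MS.
  rewrite spanL_sub; apply/allP => v /mapP[p ps ->]; rewrite sub_capmx.
  rewrite (stabX _ sW) ?(submx_trans (hin' p ps)) //=.
  by rewrite sub_kermx -mulmxA -exprSr_mx prednK ?hend' ?hpos'.
set Z := (KW :\: BotS)%MS.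
have rZ : (\rank Z + \rank BotS)%N = \rank KW.
  by rewrite -(mxrank_cap_compl KW BotS) (capmx_idPr BotKW) addnC.
have ZKW : (Z <= KW)%MS by apply: diffmxSl.
pose Zs := [seq row i (row_base Z) | i <- enum 'I_(\rank Z)].
have Zs_sub z : z \in Zs -> (z <= Z)%MS.
  by case/mapP => i _ ->; apply: submx_trans (row_sub i _) _; rewrite eq_row_base.
have Zs_KW z : z \in Zs -> (z <= KW)%MS by move/Zs_sub/submx_trans; apply.
pose s := [seq (lift p.1, p.2.+1) | p <- s'] ++ [seq (z, 1%N) | z <- Zs].
have hinS : all (fun p => p.1 <= W)%MS s.
  apply/allP => x; rewrite mem_cat => /orP[] /mapP[y yin ->] /=.
    exact: liftW.
  by apply: submx_trans (Zs_KW y yin) (capmxSl _ _).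
exists s; split.
- by rewrite all_cat !all_map; apply/andP; split; apply/allP.
- have -> : map snd s = map succn (map snd s') ++ map (fun _ => 1%N) Zs.
    by rewrite map_cat -!map_comp.
  exact: sorted_succ.
- apply/allP => x; rewrite mem_cat => /orP[] /mapP[y yin ->] /=.
    by rewrite exprS_mx mulmxA liftX ?hin' ?hend'.
  have := Zs_KW y yin; rewrite sub_capmx sub_kermx => /andP[_ /eqP h].
  by rewrite expr1 h.
- exact: hinS.
have WS : (W <= spanL (chainvs s))%MS.
  pose Su := spanL (chainvs [seq (lift p.1, p.2) | p <- s']).
  have SuS : (Su <= spanL (chainvs s))%MS.
    rewrite spanL_sub; apply/allP => v /mem_chainvs[p /mapP[p0 p0s ->] [q hq ->]].
    apply: mem_spanL; apply: (@chainvs_mem (lift p0.1, p0.2.+1)) => //=.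
      by rewrite mem_cat map_f.
    by apply: ltnW.
  have SuW : (Su <= W)%MS.
    by apply: heads_sub => //; rewrite all_map; apply/allP => p _ /=.
  have W'Su : (W' <= Su *m X)%MS.
    move/andP: hspan => [_ h]; apply: submx_trans h _.
    rewrite spanL_sub; apply/allP => v /mem_chainvs[p ps [q hq ->]].
    have -> : p.1 *m X ^+ q = (lift p.1 *m X ^+ q) *m X.
      by rewrite -mulmxA -exprSr_mx exprS_mx mulmxA liftX ?hin'.
    apply: submxMr; apply: mem_spanL.
    by apply: (@chainvs_mem (lift p.1, p.2)) => //; apply: map_f.
  have BotSS : (BotS <= spanL (chainvs s))%MS.
    rewrite spanL_sub; apply/allP => v /mapP[p ps ->]; apply: mem_spanL.
    have -> : p.1 *m X ^+ p.2.-1 = (lift p.1, p.2.+1).1 *m X ^+ p.2.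
      by rewrite /= -(prednK (hpos' p ps)) exprS_mx mulmxA liftX ?hin'.
    by apply: chainvs_mem => //; rewrite mem_cat map_f.
  have ZS : (Z <= spanL (chainvs s))%MS.
    have ZrZ : (Z <= row_base Z)%MS by rewrite eq_row_base.
    apply: submx_trans ZrZ _.
    apply/row_subP => i.
    apply: mem_spanL.
    have -> : row i (row_base Z) = (row i (row_base Z), 1%N).1 *m X ^+ 0.
      by rewrite /= expr0 mulmx1.
    apply: chainvs_mem => //; rewrite mem_cat; apply/orP; right.
    by apply: map_f; apply: map_f; rewrite mem_enum.
  case/submxP: W'Su => D hD.
  have EK : ((W - D *m Su)%R <= KW)%MS.
    rewrite sub_capmx sub_kermx mulmxBl -mulmxA -hD subrr eqxx andbT.
    by rewrite -mulNmx addmx_sub // mulmx_sub.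
  have KWS : (KW <= Z + BotS)%MS.
    have h : (KW <= KW :\: BotS + KW :&: BotS)%MS by rewrite addsmx_diff_cap_eq.
    by apply: submx_trans h _; apply: addsmxS => //; apply: capmxSr.
  have : ((W - D *m Su + D *m Su)%R <= spanL (chainvs s))%MS.
    apply: addmx_sub; last by apply: mulmx_sub.
    apply: submx_trans EK _; apply: submx_trans KWS _.
    by rewrite addsmx_sub ZS BotSS.
  by rewrite subrK.
split.
- by apply/andP; split; [exact: heads_sub | exact: WS].
- have rW := mxrank_mul_ker W X.
  have rS : (\rank W <= size (chainvs s))%N.
    apply: leq_trans (rank_spanL _); apply: mxrankS; exact: WS.
  have ms : map snd s = map succn (map snd s') ++ map (fun _ => 1%N) Zs.
    by rewrite map_cat -!map_comp.
  have sz : size (chainvs s) = (size (chainvs s') + size s' + \rank Z)%N.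
    rewrite !size_chainvs ms sumn_cat.
    have -> : sumn (map (fun _ => 1%N) Zs) = \rank Z.
      rewrite -[in RHS](size_enum_ord (\rank Z)) /Zs.
      by elim: (enum _) => //= i l ->.
    congr (_ + _)%N; elim: (s') => //= p l ->; by rewrite addSn addnS addnA.
  move: rS rW hsize rZ rBot sz; rewrite -/W' -/KW.
  move: (\rank W) (\rank W') (\rank KW) (\rank Z) (\rank BotS) => a b c d e.
  exact: arith.
Qed.

Lemma block_ends_cons l la :
  block_ends (l :: la) = l :: map (addn l) (block_ends la).
Proof.
rewrite /block_ends /= take0 addn0.
have -> : iota 2 (size la) = map (addn 1) (iota 1 (size la)) by rewrite -iotaDl.
by rewrite -!map_comp; congr (_ :: _); apply: eq_map => r.
Qed.

Lemma block_ends_pos la : all (fun p => 0 < p)%N la ->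
  forall x, x \in block_ends la -> (0 < x)%N.
Proof.
case: la => [|a la] //= /andP[ha _] x; rewrite block_ends_cons inE.
case/orP => [/eqP -> //|/mapP[y _ ->]]; exact: leq_trans ha (leq_addr _ _).
Qed.

Lemma chainvs_next s : all (fun p => 0 < p.2)%N s ->
  all (fun p => p.1 *m X ^+ p.2 == 0) s ->
  forall i, (i < size (chainvs s))%N ->
  nth 0 (chainvs s) i *m X =
    if i.+1 \in block_ends (map snd s) then 0 else nth 0 (chainvs s) i.+1.
Proof.
elim: s => [|[u l] s IH] // /andP[hl hs] /andP[/eqP hu he] i.
have -> : chainvs ((u, l) :: s) = chainv (u, l) ++ chainvs s by [].
rewrite /= block_ends_cons inE size_cat size_map size_iota /= => hi.
have hpos : forall x, x \in block_ends (map snd s) -> (0 < x)%N.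
  by apply: block_ends_pos; rewrite all_map.
rewrite !nth_cat size_map size_iota.
have [ilt|ige] := ltnP i l.
  have nm : (i.+1 \in map (addn l) (block_ends [seq i.2 | i <- s])) = false.
    apply/negP => /mapP[y /hpos yp] /eqP; lia.
  rewrite nm orbF (nth_map 0%N) ?size_iota // nth_iota // add0n.
  have [e|ne] := eqVneq i.+1 l.
    by rewrite -mulmxA -exprSr_mx e hu.
  have ilt' : (i.+1 < l)%N by lia.
  by rewrite ilt' (nth_map 0%N) ?size_iota // nth_iota // add0n exprSr_mx mulmxA.
have ne : (i.+1 == l) = false by apply/negbTE; lia.
have nlt : (i.+1 < l)%N = false by apply/negbTE; lia.
rewrite ne nlt /=.
have -> : (i.+1 - l = (i - l).+1)%N by lia.
have -> : (i.+1 \in map (addn l) (block_ends [seq i.2 | i <- s])) =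
          ((i - l).+1 \in block_ends [seq i.2 | i <- s]).
  have {1}-> : i.+1 = (l + (i - l).+1)%N by rewrite addnS subnKC.
  by rewrite (mem_map (@addnI l)).
by apply: IH => //; lia.
Qed.

Lemma jordan_exists : exists la, is_partition n la /\
  exists h : 'M[K]_n, h \in unitmx /\ h *m X = jordan_nil K n la *m h.
Proof.
have [s [hpos hsort hend hin [hspan hsize]]] :
    exists s, chain_ok 1%:M s by apply: (@chain_exists n) => //; rewrite ?mxrank1 ?submx1.
rewrite mxrank1 in hsize.
set L := chainvs s.
exists (map snd s); split.
  by split => //; [rewrite all_map | rewrite -size_chainvs].
pose h := \matrix_(i < n) nth 0 L i.
have hL : (h == spanL L)%MS.
  apply/andP; split.
    apply/row_subP => i; rewrite rowK; apply: mem_spanL; apply: mem_nth.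
    by rewrite [size L]hsize.
  rewrite spanL_sub; apply/allP => v vL.
  have iv : (index v L < n)%N by have := index_mem v L; rewrite vL hsize => ->.
  by rewrite -(nth_index 0 vL) -[nth _ _ _](rowK (fun i : 'I_n => nth 0 L i) (Ordinal iv)) row_sub.
exists h; split.
  by rewrite -row_free_unit /row_free (eqmxP hL) (eqmxP hspan) mxrank1.
apply/row_matrixP => i; rewrite !row_mul rowK chainvs_next ?hsize //.
rewrite mulmx_sum_row.
case e : (i.+1 \in block_ends (map snd s)).
  by rewrite big1 // => j _; rewrite !mxE e andbF scale0r.
have [hi|hi] := ltnP i.+1 n.
  rewrite (bigD1 (Ordinal hi)) //= big1 ?addr0.
    by rewrite !mxE eqxx e /= scale1r rowK.
  move=> j /negbTE nj; rewrite !mxE.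
  have -> : ((j : nat) == i.+1) = false.
    by apply/negbTE; apply: contraFN nj => /eqP hj; apply/eqP/val_inj.
  by rewrite scale0r.
rewrite nth_default ?hsize // big1 // => j _; rewrite !mxE.
have -> : ((j : nat) == i.+1) = false by apply/negbTE; rewrite neq_ltn (leq_trans (ltn_ord j) hi).
by rewrite scale0r.
Qed.


End Jordan.


Lemma mpoly_closure (R : comRingType) N (S : {mpoly R[N]} -> Prop) :
  (forall c, S c%:MP) -> (forall i, S 'X_i) ->
  (forall p q, S p -> S q -> S (p + q)) -> (forall p q, S p -> S q -> S (p * q)) ->
  forall p, S p.
Proof.
move=> hC hX hD hM; elim/mpolyind => [|c m p _ _ hp]; first by rewrite -mpolyC0.
apply: (hD) => //; rewrite -mul_mpolyC; apply: (hM) => //.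
rewrite mpolyXE_id; apply: (big_ind S); first by rewrite -mpolyC1.
  exact: (hM).
move=> i _; elim: (m i) => [|j IH]; first by rewrite expr0 -mpolyC1.
by rewrite exprS; apply: (hM).
Qed.

Section Ev.
Variables (k : fieldType) (N : nat) (a b : 'I_N -> k).

Definition Ev (p : {mpoly k[N]}) : {poly k} :=
  mmap (@polyC k) (fun i => (a i)%:P + (b i)%:P * 'X) p.

Lemma EvC c : Ev c%:MP = c%:P. Proof. by rewrite /Ev mmapC. Qed.
Lemma EvX i : Ev 'X_i = (a i)%:P + (b i)%:P * 'X.
Proof. by rewrite /Ev [LHS]mmapX mmap1U. Qed.
Lemma EvD p q : Ev (p + q) = Ev p + Ev q. Proof. by rewrite /Ev mmapD. Qed.
Lemma EvM p q : Ev (p * q) = Ev p * Ev q.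
Proof.
exact: (mmap_is_multiplicative (fun i => (a i)%:P + (b i)%:P * 'X)
          (polyC : {rmorphism k -> {poly k}})).1.
Qed.

Lemma Ev_horner p t : (Ev p).[t] = p.@[fun i => a i + b i * t].
Proof.
elim/mpoly_closure: p => [c|i|p q hp hq|p q hp hq].
- by rewrite EvC hornerC mevalC.
- by rewrite EvX mevalXU hornerD hornerC hornerCM hornerX.
- by rewrite EvD hornerD hp hq mevalD.
- by rewrite EvM hornerM hp hq mevalM.
Qed.

Lemma Ev_coef p : (Ev p)`_0 = p.@[a] /\
  (Ev p)`_1 = \sum_(i < N) (p^`M(i)).@[a] * b i.
Proof.
elim/mpoly_closure: p => [c|i|p q [hp0 hp1] [hq0 hq1]|p q [hp0 hp1] [hq0 hq1]].
- rewrite EvC !coefC mevalC /=; split => //.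
  by rewrite big1 // => i _; rewrite mderivC meval0 mul0r.
- rewrite EvX mevalXU coefD coefC coefCM coefX /= coefD coefC coefCM coefX /=.
  rewrite mulr0 addr0 add0r mulr1; split => //.
  rewrite (bigD1 i) //= big1 ?addr0.
    rewrite mderivX mnm1E eqxx /= scale1r.
    have -> : (U_(i) - U_(i))%MM = 0%MM by apply/mnmP => j; rewrite mnmBE subnn mnm0E.
    by rewrite mpolyX0 meval1 mul1r.

  move=> j nj; rewrite mderivX mnm1E eq_sym (negbTE nj) scale0r meval0 mul0r //.
- rewrite EvD !coefD hp0 hp1 hq0 hq1 mevalD; split => //.
  by rewrite -big_split /=; apply: eq_bigr => i _; rewrite mderivD mevalD mulrDl.
- rewrite EvM coef0M hp0 hq0 mevalM; split => //.
  rewrite coefM big_ord_recr big_ord1 /= hp0 hp1 hq0 hq1.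
  rewrite mulr_sumr mulr_suml -big_split /=; apply: eq_bigr => i _.
  rewrite mderivM mevalD !mevalM; ring.
Qed.
End Ev.

Lemma poly_zero_all (k : closedFieldType) (p : {poly k}) :
  (forall t, p.[t] = 0) -> p = 0.
Proof.
move=> h; apply/eqP; apply/negPn/negP => p0.
have : size (p * 'X + (-1)%:P) != 1%N.
  by rewrite size_MXaddC (negbTE p0) /= eqSS size_poly_eq0.
case/closed_rootP => t /rootP; rewrite hornerD hornerMX hornerC h mul0r add0r.
by move/eqP; rewrite oppr_eq0 oner_eq0.
Qed.

Section Rep.
Variables (k : closedFieldType) (n m e : nat) (P : 'M[{mpoly k[n * n]}]_m).
Hypothesis HP : is_rational_repr e P.

Local Notation rho := (repr_mx e P).
Local Notation drho := (drepr_mx e P).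
Definition Pg (A : 'M[k]_n) : 'M[k]_m := map_mx (fun p => p.@[mxcoord A]) P.

Lemma rho1 : rho 1%:M = 1%:M. Proof. by case: HP. Qed.
Lemma rhoM g h : g \in unitmx -> h \in unitmx -> rho (g *m h) = rho g *m rho h.
Proof. by case: HP => _; apply. Qed.
Lemma Pg1 : Pg 1%:M = 1%:M.
Proof. by have := rho1; rewrite /repr_mx det1 expr1n invr1 scale1r. Qed.

Lemma conj_Pg g h : g \in unitmx -> h \in unitmx ->
  Pg (g *m h *m invmx g) *m rho g = rho g *m Pg h.
Proof.
move=> gu hu.
have ghu : g *m h *m invmx g \in unitmx by rewrite !unitmx_mul gu hu unitmx_inv gu.
have dg : \det g != 0 by rewrite -unitfE -unitmxE.
have dh : \det h != 0 by rewrite -unitfE -unitmxE.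
have E1 : rho (g *m h *m invmx g) = (\det h)^-e *: Pg (g *m h *m invmx g).
  rewrite /repr_mx !det_mulmx det_inv mulrAC divff ?mul1r //.
have E2 : rho h = (\det h)^-e *: Pg h by [].
have := rhoM ghu gu; rewrite mulmxKV // rhoM // E1 E2.
set d := (\det h)^-e; set A := Pg (g *m h *m invmx g); set B := Pg h; set R := rho g.
have -> : (d *: A) *m R = d *: (A *m R) by rewrite scalemxAl.
have -> : R *m (d *: B) = d *: (R *m B) by rewrite scalemxAr.
move/scalerI => h1; symmetry; apply: h1.
by rewrite /d invr_eq0 expf_eq0 (negbTE dh) andbF.
Qed.

Definition dP (Z : 'M[k]_n) : 'M[k]_m :=
  \matrix_(a, b) \sum_(i < n * n) ((P a b)^`M(i)).@[mxcoord 1%:M] * mxcoord Z i.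

Lemma drhoE Z : drho Z = dP Z - (e%:R * \tr Z) *: 1%:M.
Proof.
apply/matrixP => a b; rewrite !mxE.
have := congr1 (fun M : 'M[k]_m => M a b) Pg1; rewrite /Pg !mxE => ->.
ring.
Qed.

Lemma dP_conj g X : g \in unitmx ->
  dP (g *m X *m invmx g) *m rho g = rho g *m dP X.
Proof.
move=> gu.
set Y := g *m X *m invmx g; set R := rho g.
pose c1 := mxcoord (1%:M : 'M[k]_n).
pose EvZ Z := Ev c1 (mxcoord Z).
have mxcoordE A t B i : mxcoord (A + t *: B) i = mxcoord A i + mxcoord B i * t.
  by rewrite /mxcoord linearD linearZ /= !mxE mulrC.
have horZ Z t p : (EvZ Z p).[t] = p.@[mxcoord (1%:M + t *: Z)].
  by rewrite Ev_horner; apply: meval_eq => i; rewrite mxcoordE.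
pose DY := map_mx (EvZ Y) P; pose DX := map_mx (EvZ X) P.
pose Rp := map_mx (@polyC k) R.
pose Dm := DY *m Rp - Rp *m DX.
pose Q : 'M[{poly k}]_n := 1%:M + 'X *: map_mx (@polyC k) X.
have evQ t : map_mx (horner_eval t) Q = 1%:M + t *: X.
  apply/matrixP => i j; rewrite !mxE horner_evalE hornerD hornerM hornerX hornerC.
  by case: (i == j); rewrite /= ?hornerC ?horner0 mulrC.
have evP Z t : map_mx (horner_eval t) (map_mx (EvZ Z) P) = Pg (1%:M + t *: Z).
  by apply/matrixP => i j; rewrite !mxE horner_evalE horZ.
have evR t : map_mx (horner_eval t) Rp = R.
  by apply/matrixP => i j; rewrite !mxE horner_evalE hornerC.
have evDm t : map_mx (horner_eval t) Dm =
    Pg (1%:M + t *: Y) *m R - R *m Pg (1%:M + t *: X).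
  by rewrite map_mxB !map_mxM evP evR evP.
have detQ t : (\det Q).[t] = \det (1%:M + t *: X).
  by rewrite -horner_evalE -det_map_mx evQ.
have Q0 : \det Q != 0.
  apply/eqP => h0; have := detQ 0; rewrite h0 horner0 scale0r addr0 det1.
  by move/eqP; rewrite eq_sym oner_eq0.
have Dm0 : Dm = 0.
  apply/matrixP => a b; rewrite [RHS]mxE.
  have : \det Q * Dm a b = 0.
    apply: poly_zero_all => t; rewrite hornerM detQ.
    have [d0|dn0] := eqVneq (\det (1%:M + t *: X)) 0; first by rewrite d0 mul0r.
    have hu : 1%:M + t *: X \in unitmx by rewrite unitmxE unitfE.
    have := conj_Pg gu hu.
    have -> : g *m (1%:M + t *: X) *m invmx g = 1%:M + t *: Y.
      by rewrite mulmxDr mulmx1 mulmxDl mulmxV // -scalemxAr -scalemxAl.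
    move=> hc.
    have := congr1 (fun M : 'M[k]_m => M a b) (evDm t); rewrite hc subrr !mxE horner_evalE => ->.
    by rewrite mulr0.
  by move/eqP; rewrite mulf_eq0 (negbTE Q0) /= => /eqP.
apply/eqP; rewrite -subr_eq0; apply/eqP/matrixP => a b.
have h1 := congr1 (fun M : 'M[{poly k}]_m => (M a b)`_1) Dm0.
rewrite /= [in RHS]mxE coef0 in h1.
transitivity ((Dm a b)`_1); last by rewrite h1 mxE.
rewrite !mxE coefB !coef_sum; congr (_ - _); apply: eq_bigr => j _; rewrite !mxE.
  by rewrite coefMC (Ev_coef c1 (mxcoord Y) (P a j)).2.
by rewrite coefCM (Ev_coef c1 (mxcoord X) (P j b)).2.
Qed.

Lemma drho_conj g X : g \in unitmx ->
  drho (g *m X *m invmx g) *m rho g = rho g *m drho X.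
Proof.
move=> gu; rewrite !drhoE mulmxBl mulmxBr dP_conj //.
have -> : \tr (g *m X *m invmx g) = \tr X.
  by rewrite mxtrace_mulC mulmxA mulVmx ?mul1mx.
by rewrite !scalemx1 mul_scalar_mx mul_mx_scalar.
Qed.
End Rep.

Fixpoint allseqs (s b : nat) : seq (seq nat) :=
  match s with
  | 0 => [:: [::]]
  | s'.+1 => [::] :: [seq x :: t | x <- iota 1 b, t <- allseqs s' b]
  end.

Lemma mem_allseqs_gen s b la : (size la <= s)%N ->
  all (fun x => 0 < x <= b)%N la -> la \in allseqs s b.
Proof.
elim: s la => [|s IH] [|x la] //= hs /andP[hx hla].
rewrite inE; apply/orP; right; apply: allpairs_f; last by apply: IH.
by rewrite mem_iota add1n ltnS.
Qed.

Lemma partition_mem n la : is_partition n la -> la \in allseqs n n.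
Proof.
case=> hpos _ <-; apply: mem_allseqs_gen.
  elim: la hpos => //= x la IH /andP[hx hl]; have := IH hl; lia.
apply/allP => x xl; move/allP: hpos => /(_ x xl) -> /=.
elim: la xl => //= y la IH; rewrite inE => /orP[/eqP->|/IH]; lia.
Qed.

Lemma jordan_nil_nil (k : fieldType) n la : (jordan_nil k n la) ^+ n = 0.
Proof.
set J := jordan_nil k n la.
have H r (i j : 'I_n) : (j < i + r)%N -> (J ^+ r) i j = 0.
  elim: r i j => [|r IH] i j hij.
    by rewrite expr0 mxE; case: eqP => [e|] //; move: hij; rewrite e addn0 ltnn.
  rewrite exprSr_mx mxE big1 // => l _; rewrite [J l j]mxE.
  case: eqP => [hj|_]; last by rewrite andFb mulr0.
  by rewrite IH ?mul0r //; lia.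
by apply/matrixP => i j; rewrite H ?mxE // (leq_trans (ltn_ord j)) // leq_addl.
Qed.

Unset Implicit Arguments.

Theorem lemma1p2 (k : closedFieldType) (n m e : nat)
    (P : 'M[{mpoly k[n * n]}]_m) (HP : is_rational_repr e P) :
  (forall (la : seq nat), is_partition n la ->
     forall (w u : 'cV[k]_m), in_image_drepr e P (jordan_nil k n la) u ->
       in_semi_orbit e P (jordan_nil k n la, w) (jordan_nil k n la, w + u))
  /\
  (semi_nilcone_finite_orbits e P <->
     forall la : seq nat, is_partition n la ->
       quot_finite_orbits e P (jordan_nil k n la)).
Proof.
have r1 := rho1 HP.
have rM := rhoM HP.
split.
  move=> la _ w u [y ->]; exists 1%:M, (- y); split; first exact: unitmx1.
  by rewrite /Ad_semi /= mul1mx invmx1 mulmx1 r1 mul1mx mulmxN opprK addrC.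
split.
  move=> [reps [repsN hreps]] la hla.
  set J := jordan_nil k n la.
  have [reps' hr'] : exists reps' : seq 'cV[k]_m, forall x, x \in reps ->
      forall h, h \in unitmx -> h *m x.1 *m invmx h = J ->
      exists2 h', h' \in unitmx /\ h' *m x.1 *m invmx h' = J &
                  repr_mx e P h' *m x.2 \in reps'.
    elim: (reps) => [|x r [r' IH]]; first by exists [::].
    case: (classic (exists h, h \in unitmx /\ h *m x.1 *m invmx h = J)).
      case=> h0 [h0u h0J]; exists (repr_mx e P h0 *m x.2 :: r').
      move=> y; rewrite inE => /orP[/eqP->|yr] h hu hJ.
        by exists h0 => //; rewrite inE eqxx.
      have [h' h'J h'r] := IH y yr h hu hJ.
      by exists h' => //; rewrite inE h'r orbT.
    move=> nh; exists r' => y; rewrite inE => /orP[/eqP->|yr] h hu hJ.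
      by exfalso; apply: nh; exists h.
    exact: IH y yr h hu hJ.
  exists reps' => w.
  have Jnil : nilpotent_mx J by exists n; apply: jordan_nil_nil.
  have [[X0 w0] xr [g [v [gu]]]] := hreps J w Jnil.
  rewrite /Ad_semi /= => -[hJ hw].
  have [h' [h'u h'J] h'r] := hr' (X0, w0) xr g gu hJ.
  exists (repr_mx e P h' *m w0) => //.
  set c := h' *m invmx g.
  have cu : c \in unitmx by rewrite unitmx_mul h'u unitmx_inv.
  have cJ : c *m J = J *m c.
    have e1 : c *m J = h' *m X0 *m invmx g.
      by rewrite -{1}hJ /c !mulmxA mulmxKV.
    have e2 : J *m c = h' *m X0 *m invmx g.
      by rewrite -{1}h'J /c !mulmxA mulmxKV.
    by rewrite e1 e2.
  exists c; split; first by [].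
  have cJc : c *m J *m invmx c = J by rewrite cJ mulmxK.
  exists (- (repr_mx e P c *m v)).
  rewrite -hw hJ mulmxDr mulmxN.
  rewrite [repr_mx e P c *m (drepr_mx e P J *m v)]mulmxA -(drho_conj HP J cu) cJc.
  rewrite [repr_mx e P c *m (repr_mx e P g *m w0)]mulmxA -rM //.
  by rewrite /c mulmxKV // addrK mulmxN mulmxA.
move=> H.
have [R [RN hR]] : exists R : seq ('M[k]_n * 'cV[k]_m),
    (forall x, x \in R -> nilpotent_mx x.1) /\
    forall la, la \in allseqs n n -> is_partition n la ->
      forall w, exists2 w0, (jordan_nil k n la, w0) \in R &
        exists g, in_centralizer (jordan_nil k n la) g /\
          in_image_drepr e P (jordan_nil k n la) (repr_mx e P g *m w - w0).
  elim: (allseqs n n) => [|la L [R' [R'N hR']]]; first by exists [::].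
  case: (classic (is_partition n la)) => [hla|nla].
    have [reps hreps] := H la hla.
    exists ([seq (jordan_nil k n la, w0) | w0 <- reps] ++ R'); split.
      move=> x; rewrite mem_cat => /orP[/mapP[w0 _ ->]|/R'N //].
      by exists n; apply: jordan_nil_nil.
    move=> la'; rewrite inE => /orP[/eqP->|la'L] hla' w.
      have [w0 w0r hw0] := hreps w; exists w0 => //.
      by rewrite mem_cat map_f.
    have [w0 w0r hw0] := hR' la' la'L hla' w; exists w0 => //.
    by rewrite mem_cat w0r orbT.
  exists R'; split => // la'; rewrite inE => /orP[/eqP->|la'L] hla'.
    by exfalso; apply: nla.
  exact: hR' la' la'L hla'.
exists R; split => // X w [r Xr].
have [la [hla [h [hu hX]]]] := jordan_exists (ex_intro _ r Xr).
set J := jordan_nil k n la.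
have [w0 w0R [c [[cu cJ] [y hy]]]] := hR la (partition_mem hla) hla (repr_mx e P h *m w).
exists (J, w0) => //.
set g' := invmx (c *m h).
have chu : c *m h \in unitmx by rewrite unitmx_mul cu hu.
have g'u : g' \in unitmx by rewrite unitmx_inv.
have g'J : g' *m J *m invmx g' = X.
  have e1 : (c *m h) *m X = J *m (c *m h) by rewrite -mulmxA hX !mulmxA cJ.
  by rewrite /g' invmxK -mulmxA -e1 mulKmx.
exists g', (- (repr_mx e P g' *m y)); split => //.
rewrite /Ad_semi /= g'J.
have hw0 : w0 = repr_mx e P c *m (repr_mx e P h *m w) - drepr_mx e P J *m y.
  by rewrite -hy opprB addrC subrK.
have e3 : repr_mx e P g' *m (repr_mx e P c *m (repr_mx e P h *m w)) = w.
  rewrite !mulmxA -rM // -rM ?unitmx_mul ?g'u ?cu //.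
  by rewrite -mulmxA /g' mulVmx // r1 mul1mx.
rewrite hw0 mulmxBr e3 mulmxA -(drho_conj HP J g'u) g'J.
by rewrite mulmxN opprK -mulmxA addrC subrK.
Qed.
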